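(* Let $L$ be a subspace of $\bigwedge^{k}V$ and let $I\subseteq[n]$. Suppose $N_{j\to i}L=L$ for all $i<j$ with $i,j\in I$. Then for each $x\in\bigwedge V^{(I)}$, the family of variable sets of those monomials $y\in\bigwedge V^{([n]\setminus I)}$ with $x\wedge y\in L$ is a shifted set system (with respect to $I$).
   Context: $\mathbb{F}$ is a field (assumed throughout the paper, for expository purposes, to have characteristic not $2$), $V$ is an $n$-dimensional $\mathbb{F}$-vector space with a fixed basis $e_1,\dots,e_n$, and $\bigwedge V$ its exterior algebra; for $S=\{s_1<\cdots<s_r\}\subseteq[n]$, the monomial $e_S=e_{s_1}\wedge\cdots\wedge e_{s_r}$ has variable set $S$, and the monomials with $|S|=k$ form a basis of $\bigwedge^kV$. For $J\subseteq[n]$, $V^{(J)}$ is the span of $\{e_h:h\notin J\}$ (so $V^{([n]\setminus I)}$ is spanned by $\{e_h:h\in I\}$), $V^{(j)}=V^{(\{j\})}$, and $\bigwedge V^{(J)}$ is viewed as a subalgebra of $\bigwedge V$. Slow shift: for distinct $i,j\in[n]$ and nonzero $m\in\bigwedge^kV$, write uniquely $m=x'+e_j\wedge y'$ with $x'\in\bigwedge^kV^{(j)}$, $y'\in\bigwedge^{k-1}V^{(j)}$, and set $N_{j\to i}m=x'+e_i\wedge y'$ if this is nonzero, and $N_{j\to i}m=e_j\wedge y'$ otherwise (the limit as $t\to0$ of the projective action of $e_j\mapsto e_i+te_j$, fixing the other $e_h$). For a subspace $L$, $N_{j\to i}L$ is the span of $\{N_{j\to i}m:m\in L\setminus\{0\}\}$.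 A family $\mathcal{F}$ of subsets of $I$ is shifted (with respect to $I$) if for all $i<j$ in $I$ and every $F\in\mathcal{F}$ with $j\in F$, $i\notin F$, also $(F\setminus\{j\})\cup\{i\}\in\mathcal{F}$. *)

(* Defs.v *)
From HB Require Import structures.
From mathcomp Require Import all_boot all_order all_algebra.
Set Implicit Arguments. Unset Strict Implicit. Unset Printing Implicit Defensive.
Import Order.TTheory GRing.Theory Num.Theory.
Local Open Scope ring_scope.

(* Exterior algebra of V = F^n with basis e_0,...,e_{n-1} (0-based indices
   standing for e_1,...,e_n): an element is given by its coordinates on the
   monomial basis e_S, S a subset of 'I_n. *)
Notation ext F n := {ffun {set 'I_n} -> (F : fieldType)^o} (only parsing).

Section Ext.
Variables (F : fieldType) (n : nat).
Implicit Types (S T U J : {set 'I_n}) (x y m : ext F n).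

Definition mono S : ext F n := [ffun T => (T == S)%:R].

(* sign in e_S /\ e_T = sgn(S,T) e_(S u T) for disjoint S, T:
   (-1)^(number of pairs (s,t) in S x T with s > t) *)
Definition wsign S T : F :=
  (-1) ^+ #|[set p in setX S T | (nat_of_ord p.2 < nat_of_ord p.1)%N]|.

Definition wedge x y : ext F n :=
  [ffun U => \sum_(S : {set 'I_n}) \sum_(T : {set 'I_n})
     (if [disjoint S & T] && (S :|: T == U) then wsign S T * x S * y T else 0)].

Definition homog (k : nat) x : Prop := forall S, x S != 0 -> #|S| = k.

(* x lies in bigwedge V^(J), V^(J) = span{e_h : h notin J} *)
Definition in_sub J x : Prop := forall S, x S != 0 -> [disjoint S & J].

(* unique decomposition m = x' + e_j /\ y' with x', y' in bigwedge V^(j) *)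
Definition xpart (j : 'I_n) m : ext F n :=
  [ffun S : {set 'I_n} => if j \in S then 0 else m S].
Definition ypart (j : 'I_n) m : ext F n :=
  [ffun T : {set 'I_n} => if j \in T then 0 else wsign [set j] T * m (j |: T)].

Definition slow_shift (i j : 'I_n) m : ext F n :=
  let z := xpart j m + wedge (mono [set i]) (ypart j m) in
  if z != 0 then z else wedge (mono [set j]) (ypart j m).

Definition in_span (A : ext F n -> Prop) (v : ext F n) : Prop :=
  exists s : seq (F * ext F n),
    (forall p, p \in s -> A p.2) /\ v = \sum_(p <- s) p.1 *: p.2.

Definition shift_stable (i j : 'I_n) (L : {pred ext F n}) : Prop :=
  forall v, v \in L <->
    in_span (fun u => exists m, [/\ m \in L, m != 0 & u = slow_shift i j m]) v.

End Ext.

Definition shifted (n : nat) (I : {set 'I_n}) (Fam : {set {set 'I_n}}) : Prop :=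
  forall (i j : 'I_n), i \in I -> j \in I -> (i < j)%N ->
  forall A, A \in Fam -> j \in A -> i \notin A -> (i |: (A :\ j)) \in Fam.

(* Main.v *)
Require Import Defs.
From HB Require Import structures.
From mathcomp Require Import all_boot all_order all_algebra.
From mathcomp Require Import ring.
Import GRing.Theory.
Local Open Scope ring_scope.

Section S.
Variables (F : fieldType) (n : nat).
Implicit Types (S T U A B X Y : {set 'I_n}).

Definition sgf (s t : 'I_n) : F := if (t < s)%N then -1 else 1.

Lemma wsignP S T : wsign F S T = \prod_(s in S) \prod_(t in T) sgf s t.
Proof.
rewrite /wsign -prodr_const big_mkcond /= pair_big_dep /=.
rewrite [RHS]big_mkcond /=; apply: eq_bigr => -[a b] _ /=.
rewrite !inE /sgf /=; by case: (a \in S); case: (b \in T); case: (b < a)%N.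
Qed.

Lemma wsignUr S X Y : [disjoint X & Y] ->
  wsign F S (X :|: Y) = wsign F S X * wsign F S Y.
Proof.
move=> d; rewrite !wsignP -big_split /=; apply: eq_bigr => s _.
by rewrite (eq_bigl [predU X & Y]) ?bigU // => t; rewrite !inE.
Qed.

Lemma wsignUl S X Y : [disjoint X & Y] ->
  wsign F (X :|: Y) S = wsign F X S * wsign F Y S.
Proof. by move=> d; rewrite !wsignP (eq_bigl [predU X & Y]) ?bigU // => t; rewrite !inE. Qed.

Lemma wsign_swap1 a S : a \notin S ->
  wsign F [set a] S * wsign F S [set a] = (-1) ^+ #|S|.
Proof.
move=> aS; rewrite !wsignP big_set1 -prodr_const -big_split /=.
apply: eq_bigr => s sS; rewrite big_set1 /sgf.
have nas : a != s by apply: contraNneq aS => ->.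
case: ltngtP => //=; [by rewrite mulr1 | by rewrite mul1r |].
by move=> /val_inj e; rewrite e eqxx in nas.
Qed.

Lemma wsign_sq S T : wsign F S T * wsign F S T = 1.
Proof. by rewrite /wsign -expr2 sqrr_sign. Qed.

Lemma wsign_neq0 S T : wsign F S T != 0.
Proof. by rewrite /wsign signr_eq0. Qed.


Lemma sum_uniq (T : finType) (G : T -> F) (P : pred T) t0 :
  (forall t, P t -> t = t0) ->
  \sum_t (if P t then G t else 0) = if P t0 then G t0 else 0.
Proof.
move=> uP; rewrite (bigD1 t0) //= big1 ?addr0 // => t tn.
by case: ifP => // /uP e; rewrite e eqxx in tn.
Qed.

Lemma sum_one (T : finType) (G : T -> F) t0 :
  (forall t, t != t0 -> G t = 0) -> \sum_t G t = G t0.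
Proof. by move=> H; rewrite (bigD1 t0) //= big1 ?addr0. Qed.

Lemma if_nat (b c : bool) (a : F) : (if b then a * c%:R else 0) = if b && c then a else 0.
Proof. by case: b; case: c; rewrite ?mulr1 ?mulr0. Qed.

Lemma if_natL (b c : bool) (a : F) : (if b then c%:R * a else 0) = if b && c then a else 0.
Proof. by case: b; case: c; rewrite ?mul1r ?mul0r. Qed.

Lemma disjP (A B : {set 'I_n}) : reflect (forall u, u \in A -> u \notin B) [disjoint A & B].
Proof.
rewrite disjoint_subset; apply: (iffP subsetP) => H u /H; by rewrite inE.
Qed.

Lemma setDUK' (A U : {set 'I_n}) : A \subset U -> A :|: (U :\: A) = U.
Proof.
move=> AU; apply/setP => u; rewrite !inE; case uA: (u \in A) => //=.
by rewrite (subsetP AU).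
Qed.

Lemma wedge_monoR (x : ext F n) A U : wedge x (mono F A) U =
  if A \subset U then wsign F (U :\: A) A * x (U :\: A) else 0.
Proof.
rewrite ffunE.
under eq_bigr => S _.
  under eq_bigr => T _ do rewrite ffunE if_nat.
  rewrite (@sum_uniq _ _ _ A); last by move=> T /andP[_ /eqP].
  over.
rewrite /= (@sum_uniq _ _ _ (U :\: A)).
- rewrite eqxx andbT.
  have -> : [disjoint U :\: A & A] by apply/disjP => u; rewrite inE; case/andP.
  case: (boolP (A \subset U)) => AU /=.
    by rewrite setUC setDUK' ?eqxx.
  case: eqP => // e; case/negP: AU; rewrite -e; exact: subsetUr.
- move=> S /andP[/andP[d /eqP <-] _].
  by rewrite setDUl setDv setU0; apply/esym/setDidPl.
Qed.

Lemma wedge_monoL (y : ext F n) A U : wedge (mono F A) y U =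
  if A \subset U then wsign F A (U :\: A) * y (U :\: A) else 0.
Proof.
rewrite ffunE.
under eq_bigr => S _.
  under eq_bigr => T _ do rewrite ffunE -mulrA mulrCA if_natL.
  over.
rewrite /= (@sum_one _ _ A); last first.
  move=> S nSA; apply: big1 => T _; by rewrite (negbTE nSA) andbF.
rewrite (@sum_uniq _ _ _ (U :\: A)).
- rewrite eqxx andbT.
  have -> : [disjoint A & U :\: A] by apply/disjP => u uA; rewrite inE uA.
  case: (boolP (A \subset U)) => AU /=.
    by rewrite setDUK' ?eqxx ?mulrA.
  case: eqP => // e; case/negP: AU; rewrite -e; exact: subsetUl.
- move=> T /andP[/andP[d /eqP <-] _].
  rewrite setDUl setDv set0U; apply/esym/setDidPl; by rewrite disjoint_sym.
Qed.
End S.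

Theorem proposition3p12 (F : fieldType) (n k : nat)
    (char_not2 : (2 \notin [pchar F])%N)
    (L : {pred ext F n}) (L_sub : submod_closed L)
    (L_homog : forall v, v \in L -> homog k v)
    (I : {set 'I_n})
    (L_stable : forall i j : 'I_n, i \in I -> j \in I -> (i < j)%N ->
                  shift_stable i j L)
    (x : ext F n) (x_in : in_sub I x) :
  shifted I [set S : {set 'I_n} | (S \subset I) && (wedge x (mono F S) \in L)].
Proof.
move=> i j iI jI ij A; rewrite inE => /andP[AI mL] jA iA.
rewrite inE; apply/andP; split.
  apply/subsetP => u; rewrite !inE => /orP[/eqP->|/andP[_ uA]] //.
  exact: (subsetP AI).
set B := A :\ j.
have jB : j \notin B by rewrite !inE eqxx.
have iB : i \notin B by rewrite !inE (negbTE iA) andbF.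
have nij : i != j by apply: contraTneq ij => ->; rewrite ltnn.
have xI : forall S : {set 'I_n}, ~~ [disjoint S & I] -> x S = 0 :> F.
  by move=> S; apply: contraNeq; apply: x_in.
set w := wedge x (mono F (i |: B)).
set m := wedge x (mono F A).
set c := wsign F [set i] B * wsign F [set j] B.
have zw : xpart j m + wedge (mono F [set i]) (ypart j m) = c *: w.
  apply/ffunP => U.
  rewrite [LHS]ffunE [RHS]ffunE /w wedge_monoR wedge_monoL [xpart _ _ _]ffunE /m wedge_monoR [ypart _ _ _]ffunE wedge_monoR sub1set.
  rewrite -[c *: _]/(c * _).
  have AjB : A = j |: B by rewrite /B setD1K.
  have uBij : forall u, u \in B -> (u != i) && (u != j).
    move=> u uB; apply/andP; split; last by move: uB; rewrite !inE; case/andP.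
    by apply: contraTneq uB => ->.
  rewrite (_ : (if j \in U then _ else _) = 0) ?add0r; last first.
    case jU: (j \in U) => //; rewrite ifF //; apply: contraFF jU => /subsetP; exact.
  case iU: (i \in U); last first.
    rewrite ifF ?mulr0 //; apply: contraFF iU => /subsetP; apply; exact: setU11.
  rewrite in_setD1 eq_sym nij /=.
  case jU: (j \in U).
    rewrite mulr0; case: ifP => _; last by rewrite mulr0.
    apply/eqP; rewrite eq_sym !mulf_eq0; apply/orP; right; apply/orP; right; apply/eqP; apply: xI.
    apply/negP => /disjP /(_ j).
    have nji : j != i by rewrite eq_sym.
    have jS : j \in U :\: (i |: B) by rewrite in_setD jU in_setU1 (negbTE nji) (negbTE jB).
    by move=> /(_ jS); rewrite jI.
  have sub : (A \subset j |: U :\ i) = (i |: B \subset U).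
    rewrite AjB !subUset !sub1set setU11 iU /=.
    apply/subsetP/subsetP => H u uB; have := H u uB; have /andP[ui uj] := uBij u uB;
      by rewrite !inE (negbTE ui) (negbTE uj).
  rewrite sub; case BU: (i |: B \subset U); last by rewrite !mulr0.
  have seq : (j |: U :\ i) :\: A = U :\: (i |: B).
    apply/setP => u; rewrite !inE; case: (eqVneq u j) => [->|uj]; first by rewrite jA jU /= andbF.
    by case: (u == i); case: (u \in A); case: (u \in U).
  rewrite seq; set S := U :\: (i |: B).
  have [x0|xn0] := eqVneq (x S) 0; first by rewrite x0 !mulr0.
  have dSI := x_in _ xn0.
  have iS : i \notin S by apply/negP => /(disjP _ _ _ dSI); rewrite iI.
  have jS : j \notin S by apply/negP => /(disjP _ _ _ dSI); rewrite jI.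
  have Ueq : U :\ i = S :|: B.
    apply/setP => u; rewrite in_setD1 in_setU /S in_setD in_setU1.
    case: (eqVneq u i) => [->|ui] /=; first by rewrite (negbTE iB).
    case uB: (u \in B) => /=; last by rewrite orbF.
    by rewrite (subsetP BU) // in_setU1 uB orbT.
  have dSB : [disjoint S & B].
    by apply/disjP => u; rewrite /S in_setD in_setU1 => /andP[/norP[_ ->]].
  rewrite Ueq AjB.
  have dj : [disjoint [set j] & B] by rewrite disjoints1.
  have di : [disjoint [set i] & B] by rewrite disjoints1.
  rewrite !wsignUr //.
  have e : wsign F S [set i] = wsign F [set i] S * (-1) ^+ #|S|.
    by rewrite -(@wsign_swap1 F n i S iS) mulrA wsign_sq mul1r.
  rewrite e -(@wsign_swap1 F n j S jS) /c.
  ring.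
have L0 : 0 \in L by case: L_sub.
case w0: (w == 0); first by rewrite (eqP w0).
have cn0 : c != 0 by rewrite mulf_neq0 // wsign_neq0.
set z := xpart j m + wedge (mono F [set i]) (ypart j m) in zw.
have zn0 : z != 0 by rewrite zw scaler_eq0 negb_or cn0 w0.
have mn0 : m != 0.
  apply: contraNneq zn0 => m0; apply/eqP/ffunP => U.
  rewrite /z m0 [LHS]ffunE [xpart _ _ _]ffunE wedge_monoL [ypart _ _ _]ffunE !ffunE.
  by rewrite !(mulr0, if_same, addr0).
have zL : z \in L.
  apply/(L_stable i j iI jI ij z); exists [:: (1, z)]; split.
    move=> p; rewrite inE => /eqP -> /=; exists m; split => //.
    by rewrite /slow_shift -/z zn0.
  by rewrite big_cons big_nil scale1r addr0.
have -> : w = c *: z + 0.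
  by rewrite addr0 zw scalerA /c mulrACA !wsign_sq mulr1 scale1r.
by case: L_sub => _ /(_ c z 0 zL L0).
Qed.
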